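(* Let $n\ge1$. For every rectangular permutation $\pi\in S_n$ there is exactly one pair $(x,\sigma)$ with $x\in\{1,2,u,d\}$ and $\sigma$ a rectangular permutation in $S_{n-1}$ lying in the domain of $\psi_x$, such that $\pi=\psi_x(\sigma)$.
   Context: A permutation is rectangular if it avoids the patterns $2413,2431,4213,4231$; $S_0=\{e_0\}$ contains only the empty permutation. For $\pi\in S_n$ (one-line form) and $1\le i,j\le n+1$, $\rho_{i,j}(\pi)\in S_{n+1}$ is obtained by increasing by $1$ every entry $\ge i$ and inserting the value $i$ at position $j$. Operators: $\psi_1=\rho_{1,1}$, domain all rectangular permutations (including $e_0$); $\psi_2=\rho_{1,2}$, domain rectangular $\pi$ of size $\ge1$ with $\pi_1\ne1$; $\psi_u(\pi)=\rho_{\pi_1,1}(\pi)$, domain rectangular $\pi$ of size $\ge1$ with $\pi_1\neq1$; $\psi_d(\pi)=\rho_{\pi_1+1,1}(\pi)$, domain rectangular $\pi$ of size $\ge1$. *)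

(* Defs.v *)
From mathcomp Require Import all_boot.
Set Implicit Arguments. Unset Strict Implicit. Unset Printing Implicit Defensive.

(* Permutations in one-line form: a permutation of S_n is a sequence of
   naturals that is a rearrangement of [1; 2; ...; n]. S_0 = {[::]}. *)
Definition is_perm (n : nat) (s : seq nat) : Prop := perm_eq s (iota 1 n).

Definition order_iso (t p : seq nat) : Prop :=
  size t = size p /\
  forall i j, i < size t -> j < size t ->
    (nth 0 t i < nth 0 t j) = (nth 0 p i < nth 0 p j).

Definition contains (s p : seq nat) : Prop :=
  exists m : bitseq, size m = size s /\ order_iso (mask m s) p.

Definition avoids (s p : seq nat) : Prop := ~ contains s p.

Definition rectangular (s : seq nat) : Prop :=
  avoids s [:: 2; 4; 1; 3] /\ avoids s [:: 2; 4; 3; 1] /\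
  avoids s [:: 4; 2; 1; 3] /\ avoids s [:: 4; 2; 3; 1].

(* rho_{i,j}: increase by 1 every entry >= i, then insert value i at
   (1-indexed) position j. *)
Definition rho (i j : nat) (s : seq nat) : seq nat :=
  let s' := [seq (if i <= x then x.+1 else x) | x <- s] in
  take j.-1 s' ++ i :: drop j.-1 s'.

Inductive op := op1 | op2 | opu | opd.

Definition first (s : seq nat) : nat := head 0 s.

Definition psi (x : op) (s : seq nat) : seq nat :=
  match x with
  | op1 => rho 1 1 s
  | op2 => rho 1 2 s
  | opu => rho (first s) 1 s
  | opd => rho (first s).+1 1 s
  end.

Definition in_domain (x : op) (s : seq nat) : Prop :=
  rectangular s /\
  match x with
  | op1 => True
  | op2 => 1 <= size s /\ first s <> 1
  | opu => 1 <= size s /\ first s <> 1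
  | opd => 1 <= size s
  end.

(* Main.v *)
Require Import Defs.
From mathcomp Require Import all_boot.
From mathcomp Require Import zify.
Set Implicit Arguments. Unset Strict Implicit.

Definition inc (k x : nat) := if k <= x then x.+1 else x.
Definition dec (k x : nat) := if k < x then x.-1 else x.

Lemma dec_inc k y : dec k (inc k y) = y.
Proof. rewrite /dec /inc; case: (leqP k y) => H /=; [rewrite ltnS H //| rewrite ltnNge (ltnW H) //]. Qed.

Lemma inc_dec k y : y != k -> inc k (dec k y) = y.
Proof. rewrite /dec /inc => Hy; case: (ltnP k y) => H; case: ifP => H2; lia. Qed.

Lemma dec_lt k x y : x != k -> y != k -> (dec k x < dec k y) = (x < y).
Proof.
rewrite /dec => Hx Hy; case: (ltnP k x) => H1; case: (ltnP k y) => H2;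
apply/idP/idP; lia.
Qed.

Lemma is_permP n s : is_perm n s <-> uniq s /\ forall x, (x \in s) = (0 < x <= n).
Proof.
split.
- move=> H; split; first by rewrite (perm_uniq H) iota_uniq.
  by move=> x; rewrite (perm_mem H) mem_iota; lia.
- case=> U M; apply: uniq_perm => //; first exact: iota_uniq.
  by move=> x; rewrite M mem_iota; lia.
Qed.

Lemma contains_sub s p : contains s p -> exists t, subseq t s /\ order_iso t p.
Proof.
case=> m [Hm Ho]; exists (mask m s); split=> //; exact: mask_subseq.
Qed.

Lemma sub_contains s p t : subseq t s -> order_iso t p -> contains s p.
Proof. by case/subseqP=> m Hm ->; exists m. Qed.

Lemma avoid_transfer pi s0 k p :
  avoids pi p -> subseq s0 pi -> k \notin s0 -> avoids (map (dec k) s0) p.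
Proof.
move=> Ha Hs Hk /contains_sub [t [Ht [Hsz Ho]]]; apply: Ha.
case/subseqP: Ht => m Hm Et.
rewrite -map_mask in Et.
have Hsub : subseq (mask m s0) pi := subseq_trans (mask_subseq _ _) Hs.
apply: (sub_contains Hsub); split.
- by rewrite -Hsz Et size_map.
- move=> i j Hi Hj.
  have Hi' : i < size t by rewrite Et size_map.
  have Hj' : j < size t by rewrite Et size_map.
  rewrite -(Ho i j Hi' Hj') Et !(nth_map 0) //.
  have nk : forall l, l < size (mask m s0) -> nth 0 (mask m s0) l != k.
    move=> l Hl; apply/eqP => E; move: (mem_nth 0 Hl); rewrite E => /mem_mask.
    by rewrite (negbTE Hk).
  by rewrite dec_lt ?nk.
Qed.

Lemma rect_transfer pi s0 k :
  rectangular pi -> subseq s0 pi -> k \notin s0 -> rectangular (map (dec k) s0).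
Proof.
by case=> [H1 [H2 [H3 H4]]] Hs Hk; split; [|split; [|split]];
  apply: (avoid_transfer _ Hs Hk).
Qed.

Lemma G n pi k s0 :
  is_perm n pi -> perm_eq pi (k :: s0) -> subseq s0 pi -> rectangular pi ->
  [/\ is_perm n.-1 (map (dec k) s0), rectangular (map (dec k) s0),
      map (inc k) (map (dec k) s0) = s0 & k \notin s0].
Proof.
move=> /is_permP [U M] Hpe Hs Hr.
have U' : uniq (k :: s0) by rewrite -(perm_uniq Hpe).
have M' : forall x, (x \in k :: s0) = (0 < x <= n).
  by move=> x; rewrite -(perm_mem Hpe) M.
move: (U') => /= /andP [Hk Us0].
have Mk : 0 < k <= n by rewrite -M' mem_head.
split => //.
- apply/is_permP; split.
  + rewrite map_inj_in_uniq // => x y Hx Hy.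
    have Hx' : x != k by apply/eqP => E; move: Hx; rewrite E (negbTE Hk).
    have Hy' : y != k by apply/eqP => E; move: Hy; rewrite E (negbTE Hk).
    rewrite /dec; case: (ltnP k x); case: (ltnP k y); lia.
  + move=> x; apply/idP/idP.
    * case/mapP => y Hy ->.
      have Hy' : y != k by apply/eqP => E; move: Hy; rewrite E (negbTE Hk).
      have : 0 < y <= n by rewrite -M' inE Hy orbT.
      rewrite /dec; case: (ltnP k y); lia.
    * move=> Hx; apply/mapP; exists (inc k x); last by rewrite dec_inc.
      have Hne : inc k x != k by rewrite /inc; case: ifP; lia.
      have : inc k x \in k :: s0 by rewrite M' /inc; case: ifP; lia.
      by rewrite inE (negbTE Hne).
- exact: rect_transfer Hr Hs Hk.
- rewrite -map_comp -[RHS]map_id; apply/eq_in_map => y Hy /=.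
  apply: inc_dec; apply/eqP => E; move: Hy; rewrite E (negbTE Hk) //.
Qed.

Definition cls (pi : seq nat) : op :=
  match pi with
  | a :: b :: _ => if a == 1 then op1 else if b == a.+1 then opu
                   else if a == b.+1 then opd else op2
  | _ => op1
  end.

Definition uns (x : op) (pi : seq nat) : seq nat :=
  match x with
  | op1 => map (dec 1) (behead pi)
  | op2 => map (dec 1) (head 0 pi :: drop 2 pi)
  | _ => map (dec (head 0 pi)) (behead pi)
  end.

Lemma map_dec_inc k s : map (dec k) (map (inc k) s) = s.
Proof. by rewrite -map_comp -[RHS]map_id; apply: eq_map => y /=; rewrite dec_inc. Qed.

Lemma rhoE i j s : rho i j s = take j.-1 (map (inc i) s) ++ i :: drop j.-1 (map (inc i) s).
Proof. by []. Qed.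

Lemma invert m x s : is_perm m s -> in_domain x s ->
  cls (psi x s) = x /\ uns x (psi x s) = s.
Proof.
move=> /is_permP [U M] [_ D].
case: x D => /=.
- move=> _; rewrite rhoE /= take0 drop0; split; last by rewrite map_dec_inc.
  by case: s {U M} => //= y s.
- case: s U M => [|s1 s] U M [] // _ /eqP H1.
  have : 0 < s1 by have := M s1; rewrite mem_head => /esym /andP [].
  move=> Hs1; rewrite /first /= in H1; rewrite rhoE /= drop0.
  have E : inc 1 s1 = s1.+1 by rewrite /inc Hs1.
  rewrite E; split; last by rewrite take0 /= drop0 map_dec_inc -E dec_inc.
  rewrite take0 /=; repeat (case: eqP => [?|_]; first by exfalso; lia); done.
- case: s U M => [|s1 s] U M [] // _ /eqP H1.
  have : 0 < s1 by have := M s1; rewrite mem_head => /esym /andP [].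
  move=> Hs1; rewrite /first /= in H1; rewrite /first rhoE /=.
  have E : inc s1 s1 = s1.+1 by rewrite /inc leqnn.
  rewrite E; split; last by rewrite map_dec_inc -E dec_inc.
  rewrite /= eqxx; repeat (case: eqP => [?|_]; first by exfalso; lia); done.
- case: s U M => [|s1 s] U M // _.
  have : 0 < s1 by have := M s1; rewrite mem_head => /esym /andP [].
  move=> Hs1; rewrite /first rhoE /=.
  have E : inc s1.+1 s1 = s1 by rewrite /inc ltnn.
  rewrite E; split; last by rewrite map_dec_inc /dec; case: ifP => //; lia.
  rewrite /= eqxx; repeat (case: eqP => [?|_]; first by exfalso; lia); done.
Qed.

Lemma subseq2 (x y : nat) t : x \in t -> y \in t -> x != y ->
  subseq [:: x; y] t || subseq [:: y; x] t.
Proof.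
elim: t => [|z t IH] //= Hx Hy Hxy.
move: Hx Hy; rewrite !inE.
case: (eqVneq x z) => [Exz|Hxz]; case: (eqVneq y z) => [Eyz|Hyz] //=.
- by move: Hxy; rewrite Exz Eyz eqxx.
- by move=> _ Hy; rewrite sub1seq Hy.
- by move=> Hx _; rewrite sub1seq Hx orbT.
- by move=> Hx Hy; apply: IH.
Qed.

Lemma bad n a b t : is_perm n (a :: b :: t) -> rectangular (a :: b :: t) ->
  a != 1 -> b != a.+1 -> a != b.+1 -> b = 1.
Proof.
move=> P [R1 [R2 [R3 R4]]] Ha Hb1 Hb2; apply/eqP; apply/negPn/negP => Hb.
move: P => /is_permP [U M].
move: (U) => /= /and3P [Hab Hat Hbt].
rewrite inE negb_or in Hab; move: Hab => /andP [Hab _].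
have Ma : 0 < a <= n by rewrite -M mem_head.
have Mb : 0 < b <= n by rewrite -M !inE eqxx orbT.
have Int : forall c, 0 < c <= n -> c != a -> c != b -> c \in t.
  by move=> c Hc Hca Hcb; move: Hc; rewrite -M !inE (negbTE Hca) (negbTE Hcb).
have H1 : 1 \in t by apply: Int; lia.
have sub4 : forall x y, subseq [:: x; y] t -> subseq [:: a; b; x; y] (a :: b :: t).
  by move=> x y H /=; rewrite !eqxx.
have oi : forall x y p, size p = 4 ->
   (forall i j, i < 4 -> j < 4 -> (nth 0 [:: a; b; x; y] i < nth 0 [:: a; b; x; y] j) = (nth 0 p i < nth 0 p j)) ->
   order_iso [:: a; b; x; y] p by move=> x y p Hp Hij; split.
case: (ltnP a b) => Hlt.
- have Hc : a.+1 \in t by apply: Int; lia.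
  case/orP: (subseq2 Hc H1 ltac:(lia)) => S.
  + apply: R2; apply: (sub_contains (sub4 _ _ S)); apply: oi => //.
    by case=> [|[|[|[|i]]]] [|[|[|[|j]]]] //= _ _; apply/idP/idP; lia.
  + apply: R1; apply: (sub_contains (sub4 _ _ S)); apply: oi => //.
    by case=> [|[|[|[|i]]]] [|[|[|[|j]]]] //= _ _; apply/idP/idP; lia.
- have Hc : b.+1 \in t by apply: Int; lia.
  case/orP: (subseq2 Hc H1 ltac:(lia)) => S.
  + apply: R4; apply: (sub_contains (sub4 _ _ S)); apply: oi => //.
    by case=> [|[|[|[|i]]]] [|[|[|[|j]]]] //= _ _; apply/idP/idP; lia.
  + apply: R3; apply: (sub_contains (sub4 _ _ S)); apply: oi => //.
    by case=> [|[|[|[|i]]]] [|[|[|[|j]]]] //= _ _; apply/idP/idP; lia.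
Qed.

Lemma rect_nil : rectangular [::].
Proof.
have H : forall p, size p = 4 -> avoids [::] p.
  by move=> p Hp [m [Hm [Hs _]]]; move: Hs; rewrite mask0 Hp.
by split; [|split; [|split]]; apply: H.
Qed.

Theorem lemma4p2 (n : nat) (pi : seq nat) :
  1 <= n -> is_perm n pi -> rectangular pi ->
  exists! xs : op * seq nat,
    is_perm n.-1 xs.2 /\ in_domain xs.1 xs.2 /\ pi = psi xs.1 xs.2.
Proof.
move=> Hn P R.
exists (cls pi, uns (cls pi) pi); split; last first.
  move=> [x s] /= [Hp [Hd E]]; have [h1 h2] := invert Hp Hd.
  by rewrite E h1 h2.
have [U M] := (proj1 (is_permP n pi) P).
case: pi P R U M => [|a [|b t]] P R U M /=.
- by move/perm_size: P; rewrite size_iota /=; lia.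
- have Hn1 : n = 1 by move/perm_size: P; rewrite size_iota /=.
  have : 0 < a <= n by rewrite -M mem_head.
  move=> Ha; have -> : a = 1 by lia.
  split; first by rewrite Hn1.
  by split; [split; [exact: rect_nil|]|].
- have Ma : 0 < a <= n by rewrite -M mem_head.
  case: (eqVneq a 1) => [Ea|Ha].
  + subst a.
    have [Hp' Hr' Hinv _] := G P (perm_refl _) (subseq_cons _ _) R.
    split=> //; split; first by split.
    by rewrite /= rhoE Hinv /= ?take0 ?drop0.
  + case: (eqVneq b a.+1) => [Eb|Hb1].
    * have [Hp' Hr' Hinv _] := G P (perm_refl _) (subseq_cons _ _) R.
      have Fs : first (map (dec a) (b :: t)) = a by rewrite /first /= /dec Eb ltnSn.
      split=> //; split.
        split=> //; split=> //; rewrite Fs; exact/eqP.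
      by rewrite /psi Fs rhoE Hinv /= ?take0 ?drop0.
    * case: (eqVneq a b.+1) => [Ea|Hb2].
      -- have [Hp' Hr' Hinv _] := G P (perm_refl _) (subseq_cons _ _) R.
         have Fs : first (map (dec a) (b :: t)) = b.
           by rewrite /first /= /dec Ea ltnNge leqnSn.
         split=> //; split; first by split.
         by rewrite /psi Fs -Ea rhoE Hinv /= ?take0 ?drop0.
      -- have Eb := bad P R Ha Hb1 Hb2; subst b.
         have Hpe : perm_eq (a :: 1 :: t) (1 :: a :: t).
           by apply/permP => q /=; rewrite addnCA.
         have Hsub : subseq (a :: t) (a :: 1 :: t).
           by rewrite /= eqxx; exact: subseq_cons.
         have [Hp' Hr' Hinv _] := G P Hpe Hsub R.
         have Fs : first (map (dec 1) (a :: t)) = a.-1.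
           by rewrite /first /= /dec; case: ifP => //; lia.
         have -> : uns op2 [:: a, 1 & t] = map (dec 1) (a :: t) by rewrite /uns /= drop0.
          split=> //; split.
           split=> //; split=> //; rewrite Fs; lia.
         by rewrite /= rhoE Hinv /= take0 drop0.
Qed.
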